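(* Let $\operatorname{Hi}(z)=\pi^{-1}\int_0^\infty e^{-t^3/3+zt}\,\mathrm dt$ for $z\in\mathbb C$. For all $\theta\in[\pi/2,3\pi/2]$, $x\in\mathbb R$ and $y\ge0$, \[ \big|\operatorname{Hi}(x+e^{\mathrm i\theta}y)\big|\le\operatorname{Hi}(x). \] *)

(* Defs.v *)
From Stdlib Require Import Reals.
From Coquelicot Require Import Coquelicot.
Open Scope R_scope.

Definition Cexp (z : C) : C := (exp (Re z) * cos (Im z), exp (Re z) * sin (Im z)).

Definition Hi (z : C) : C :=
  Cmult (RtoC (/ PI))
    (RInt_gen (V := C_R_CompleteNormedModule)
       (fun t : R => Cexp (Cplus (RtoC (- t ^ 3 / 3)) (Cmult z (RtoC t))))
       (at_point 0) (Rbar_locally p_infty)).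

(* Main.v *)
Require Import Defs.
From Stdlib Require Import Reals Lra Psatz.
From Coquelicot Require Import Coquelicot.
Open Scope R_scope.

Definition fz (z : C) (t : R) : C := Cexp (Cplus (RtoC (- t ^ 3 / 3)) (Cmult z (RtoC t))).
Definition gc (c t : R) : R := exp (- t ^ 3 / 3 + c * t).

Lemma exp_mono a b : a <= b -> exp a <= exp b.
Proof. intros [H|H]. left; apply exp_increasing; auto. subst; lra. Qed.

Lemma fst_fz z t : fst (fz z t) = exp (- t ^ 3 / 3 + (fst z * t - snd z * 0)) * cos (0 + (fst z * 0 + snd z * t)).
Proof. destruct z; reflexivity. Qed.
Lemma snd_fz z t : snd (fz z t) = exp (- t ^ 3 / 3 + (fst z * t - snd z * 0)) * sin (0 + (fst z * 0 + snd z * t)).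
Proof. destruct z; reflexivity. Qed.

Lemma norm_fz z t : norm (V := C_R_NormedModule) (fz z t) = gc (fst z) t.
Proof.
  change (norm (fz z t)) with (prod_norm (K:=R_AbsRing) (U:=R_NormedModule) (V:=R_NormedModule) (fz z t)).
  unfold prod_norm. change (norm (fst (fz z t))) with (Rabs (fst (fz z t))).
  change (norm (snd (fz z t))) with (Rabs (snd (fz z t))).
  rewrite !pow2_abs, fst_fz, snd_fz. unfold gc.
  set (e := exp _). set (u := 0 + _).
  replace ((e * cos u) ^ 2 + (e * sin u) ^ 2) with (e ^ 2 * (sin u ^ 2 + cos u ^ 2)) by ring.
  rewrite <- !Rsqr_pow2, sin2_cos2, Rsqr_pow2, Rmult_1_r, sqrt_pow2.
  unfold e. f_equal. ring. unfold e; left; apply exp_pos.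
Qed.

Lemma ex_RInt_fz z a b : ex_RInt (V := C_R_CompleteNormedModule) (fz z) a b.
Proof.
  assert (H1 : ex_RInt (fun t => fst (fz z t)) a b).
  { apply (ex_RInt_continuous (V := R_CompleteNormedModule)). intros t _. apply (ex_derive_continuous (K := R_AbsRing) (V := R_NormedModule)).
    eapply ex_derive_ext. intros s; symmetry; apply fst_fz. auto_derive; auto. }
  assert (H2 : ex_RInt (fun t => snd (fz z t)) a b).
  { apply (ex_RInt_continuous (V := R_CompleteNormedModule)). intros t _. apply (ex_derive_continuous (K := R_AbsRing) (V := R_NormedModule)).
    eapply ex_derive_ext. intros s; symmetry; apply snd_fz. auto_derive; auto. }
  exists (RInt (fun t => fst (fz z t)) a b, RInt (fun t => snd (fz z t)) a b).
  apply (is_RInt_fct_extend_pair (U:=R_NormedModule) (V:=R_NormedModule) (fz z)).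
  apply (RInt_correct (V := R_CompleteNormedModule)); auto. apply (RInt_correct (V := R_CompleteNormedModule)); auto.
Qed.

Lemma poly_bound c t : 0 <= t -> - t ^ 3 / 3 + c * t <= 2 * (Rabs c + 1) ^ 2 - t.
Proof.
  intros Ht. set (a := Rabs c + 1) in *. assert (Hcl : Rabs c + 1 = a) by reflexivity. clearbody a.
  assert (Ha : 1 <= a) by (pose proof (Rabs_pos c); lra).
  assert (Hc : (c + 1) * t <= a * t).
  { apply Rmult_le_compat_r; auto. pose proof (Rle_abs c); lra. }
  assert (- t ^ 3 / 3 + a * t <= 2 * a ^ 2).
  { destruct (Rle_or_lt (3 * a) (t ^ 2)).
    - assert (t * (a - t^2/3) <= 0).
      { apply Rmult_le_0_l; auto; lra. }
      nra.
    - assert (0 <= t ^ 3) by (apply pow_le; auto).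
      assert (a * t <= (a ^ 2 + t ^ 2) / 2).
      { assert (0 <= (a - t) ^ 2) by apply pow2_ge_0.
        replace ((a - t) ^ 2) with (a ^ 2 + t ^ 2 - 2 * (a * t)) in H1 by ring. lra. }
      assert (a <= a ^ 2) by (replace (a ^ 2) with (a * a) by ring; nra).
      lra. }
  nra.
Qed.

Lemma norm_fz_le z t : 0 <= t ->
  norm (V := C_R_NormedModule) (fz z t) <= exp (2 * (Rabs (fst z) + 1) ^ 2) * exp (- t).
Proof.
  intros Ht. rewrite norm_fz, <- exp_plus. unfold gc. apply exp_mono.
  pose proof (poly_bound (fst z) t Ht). lra.
Qed.

Lemma tail_bound z b1 b2 : 0 <= b1 <= b2 ->
  norm (V := C_R_NormedModule) (RInt (V := C_R_CompleteNormedModule) (fz z) b1 b2)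
   <= exp (2 * (Rabs (fst z) + 1) ^ 2) * exp (- b1).
Proof.
  intros Hb. set (M := exp (2 * (Rabs (fst z) + 1) ^ 2)).
  assert (HM : 0 < M) by apply exp_pos.
  apply Rle_trans with (M * exp (- b1) - M * exp (- b2)).
  2: { pose proof (exp_pos (- b2)). nra. }
  apply (norm_RInt_le (V := C_R_NormedModule) (fz z) (fun t => M * exp (- t)) b1 b2).
  - lra.
  - intros t Ht. apply norm_fz_le. lra.
  - apply (RInt_correct (V := C_R_CompleteNormedModule)). apply ex_RInt_fz.
  - replace (M * exp (- b1) - M * exp (- b2)) with
      (minus ((fun t => - M * exp (- t)) b2) ((fun t => - M * exp (- t)) b1)).
    2: { unfold minus, plus, opp; simpl. ring. }
    apply (is_RInt_derive (V := R_CompleteNormedModule) (fun t => - M * exp (- t)) (fun t => M * exp (- t))).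
    + intros t _. auto_derive; auto. ring.
    + intros t _. apply (ex_derive_continuous (K := R_AbsRing) (V := R_NormedModule)).
      auto_derive; auto.
Qed.

Lemma pm_gen (G : AbelianGroup) (u v : G) : minus (plus u v) u = v.
Proof. unfold minus. rewrite (plus_comm u). rewrite <- plus_assoc.
 etransitivity. apply (f_equal (plus v)). apply plus_opp_r. apply plus_zero_r. Qed.

Lemma ex_Igen z : exists l : C,
  is_RInt_gen (V := C_R_NormedModule) (fz z) (at_point 0) (Rbar_locally p_infty) l.
Proof.
  set (G := fun b => RInt (V := C_R_CompleteNormedModule) (fz z) 0 b).
  set (F := filtermap G (Rbar_locally p_infty)).
  assert (PF : ProperFilter F).
  { apply filtermap_proper_filter, Rbar_locally_filter. }
  set (M := exp (2 * (Rabs (fst z) + 1) ^ 2)).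
  assert (HM : 0 < M) by apply exp_pos.
  assert (HC : cauchy F).
  { intros eps. pose proof (cond_pos eps) as He.
    set (N := M / eps).
    assert (HN : 0 < N) by (unfold N; apply Rdiv_lt_0_compat; auto).
    exists (G N). exists N. intros b Hb.
    apply (norm_compat1 (K := R_AbsRing) (V := C_R_NormedModule)).
    assert (E : minus (G b) (G N) = RInt (V := C_R_CompleteNormedModule) (fz z) N b).
    { unfold G. rewrite <- (RInt_Chasles (V := C_R_CompleteNormedModule) (fz z) 0 N b)
        by apply ex_RInt_fz.
      apply pm_gen. }
    apply Rle_lt_trans with (norm (V := C_R_NormedModule) (RInt (V := C_R_CompleteNormedModule) (fz z) N b)).
    { right. exact (f_equal (norm (V := C_R_NormedModule)) E). }
    eapply Rle_lt_trans. apply tail_bound. lra.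
    fold M.
    pose proof (exp_ineq1_le N).
    pose proof (exp_pos N).
    rewrite exp_Ropp.
    apply Rmult_lt_reg_r with (exp N); auto.
    rewrite Rmult_assoc, Rinv_l by lra.
    assert (eps * N = M) by (unfold N; field; lra).
    nra. }
  exists (lim F).
  assert (Hlim : filterlim G (Rbar_locally p_infty) (locally (lim F))).
  { apply filterlim_locally. intros eps. apply (complete_cauchy F PF HC eps). }
  unfold is_RInt_gen.
  apply (filterlimi_lim_ext_loc (fun ab => RInt (V := C_R_CompleteNormedModule) (fz z) (fst ab) (snd ab))).
  - apply Filter_prod with (Q := fun _ => True) (R := fun _ => True).
    + exact I.
    + apply filter_true.
    + intros a b _ _. simpl. apply (RInt_correct (V := C_R_CompleteNormedModule)). apply ex_RInt_fz.
  - intros P HP. unfold filtermap.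
    apply Filter_prod with (Q := fun a => a = 0) (R := fun b => P (G b)).
    + reflexivity.
    + apply Hlim. exact HP.
    + intros a b -> HPb. exact HPb.
Qed.

Lemma is_RInt_gen_fst (f : R -> C) (l : C) :
  is_RInt_gen (V := C_R_NormedModule) f (at_point 0) (Rbar_locally p_infty) l ->
  is_RInt_gen (V := R_NormedModule) (fun t => fst (f t)) (at_point 0) (Rbar_locally p_infty) (fst l).
Proof.
  unfold is_RInt_gen. intros H.
  apply filterlimi_locally. intros eps.
  apply filterlimi_locally with (eps := eps) in H.
  eapply filter_imp. 2: exact H.
  intros [a b] [w [Hw Hb]]. exists (fst w). split.
  - apply (is_RInt_fct_extend_fst (U := R_NormedModule) (V := R_NormedModule) f a b w Hw).
  - destruct Hb as [Hb1 Hb2]. exact Hb1.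
Qed.

Theorem lemma3p3 (theta x y : R) :
  PI / 2 <= theta <= 3 * PI / 2 -> 0 <= y ->
  Cmod (Hi (Cplus (RtoC x) (Cmult (Cexp (0, theta)) (RtoC y)))) <= Re (Hi (RtoC x)).
Proof.
  intros Hth Hy.
  set (z := Cplus (RtoC x) (Cmult (Cexp (0, theta)) (RtoC y))).
  destruct (ex_Igen z) as [lz Hz].
  destruct (ex_Igen (RtoC x)) as [lx Hx].
  assert (Ez : Hi z = Cmult (RtoC (/ PI)) lz).
  { unfold Hi. f_equal. apply (is_RInt_gen_unique (V := C_R_CompleteNormedModule)). exact Hz. }
  assert (Ex : Hi (RtoC x) = Cmult (RtoC (/ PI)) lx).
  { unfold Hi. f_equal. apply (is_RInt_gen_unique (V := C_R_CompleteNormedModule)). exact Hx. }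
  rewrite Ez, Ex.
  assert (HPI : 0 < / PI) by (apply Rinv_0_lt_compat, PI_RGT_0).
  rewrite Cmod_mult, Cmod_R, Rabs_pos_eq by lra.
  replace (Re (Cmult (RtoC (/ PI)) lx)) with (/ PI * fst lx)
    by (destruct lx; unfold Re, Cmult, RtoC; simpl; ring).
  apply Rmult_le_compat_l; [lra|].
  assert (Hcos : cos theta <= 0) by (apply cos_le_0; lra).
  assert (Hre : fst z <= x).
  { unfold z, Cexp; simpl. rewrite exp_0. nra. }
  assert (Hn : Cmod lz = norm (V := C_R_NormedModule) lz).
  { change (norm lz) with (prod_norm (K:=R_AbsRing) (U:=R_NormedModule) (V:=R_NormedModule) lz).
    unfold prod_norm, Cmod. change (norm (fst lz)) with (Rabs (fst lz)).
    change (norm (snd lz)) with (Rabs (snd lz)). rewrite !pow2_abs. reflexivity. }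
  rewrite Hn.
  apply (RInt_gen_norm (V := C_R_CompleteNormedModule) (Fa := at_point 0) (Fb := Rbar_locally p_infty) (fz z) (fun t => fst (fz (RtoC x) t))).
  - apply Filter_prod with (Q := fun a => a = 0) (R := fun b => 0 <= b).
    + reflexivity.
    + exists 0. intros; lra.
    + intros a b -> Hb. exact Hb.
  - apply Filter_prod with (Q := fun a => a = 0) (R := fun b => 0 <= b).
    + reflexivity.
    + exists 0. intros; lra.
    + intros a b -> Hb t Ht. simpl in Ht.
      rewrite norm_fz, fst_fz. unfold gc.
      change (fst (RtoC x)) with x. change (snd (RtoC x)) with 0.
      replace (0 + (x * 0 + 0 * t)) with 0 by ring. rewrite cos_0, Rmult_1_r.
      apply exp_mono.
      assert (fst z * t <= x * t) by (apply Rmult_le_compat_r; lra).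
      replace (- t ^ 3 / 3 + (x * t - 0 * 0)) with (- t ^ 3 / 3 + x * t) by ring.
      lra.
  - exact Hz.
  - apply (is_RInt_gen_fst (fz (RtoC x)) lx Hx).
Qed.
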